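(* Consider BSPR networks with $K$ relays, $K=1,2,\dots$. Suppose that for each $K$ there exists $\mathcal M\subseteq\{1,\dots,K\}$ such that $|\mathcal M|\,(0.5-p_{\textnormal{MAX}(\mathcal M)})^2\to\infty$ as $K\to\infty$, where $p_{\textnormal{MAX}(\mathcal M)}=\max_{m\in\mathcal M}p_m$ and $p_i=p_{s,i}(1-p_{i,d})+(1-p_{s,i})p_{i,d}$. Then for any $\epsilon>0$ and any rate $R<1$, uncoded transmission with forwarding relays achieves average error probability $P_e\le\epsilon$ for sufficiently large $n$ and $K$.
   Context: BSPR network with $K$ relays: at each network use $t$ the source sends $U[t]\in\{0,1\}$; relay $i$ receives $V_i[t]=U[t]\oplus Z_i[t]$, $\Pr\{Z_i=1\}=p_{s,i}\in[0,1/2]$; relay $i$ sends $X_i[t]$ and the destination receives $Y_i[t]=X_i[t]\oplus E_i[t]$, $\Pr\{E_i=1\}=p_{i,d}\in[0,1/2]$; all noises mutually independent and i.i.d. over time. Uncoded transmission with forwarding relays: the message is $W=(W_1,\dots,W_n)$ with i.i.d. uniform bits; the source sends $U[t]=W_t$; each relay forwards, $X_i[t+1]=V_i[t]$ ($X_i[1]=0$); $n$ bits are sent in $n+1$ network uses (rate $n/(n+1)$), and the destination estimates each bit $W_t$ from its received symbols $(Y_1[t+1],\dots,Y_K[t+1])$ using a suitable decoding rule. $P_e$ is the probability of erroneous decoding at the destination. *)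

(* Defs.v *)
From HB Require Import structures.
From mathcomp Require Import all_boot all_order all_algebra.
Set Implicit Arguments. Unset Strict Implicit. Unset Printing Implicit Defensive.
Import Order.TTheory GRing.Theory Num.Theory.
Local Open Scope ring_scope.

Definition bern (R : realFieldType) (p : R) (b : bool) : R := if b then p else 1 - p.

(* Network uses are indexed 0..n (i.e. uses 1..n+1 in the paper's numbering).
   Source symbol: U[t] = W_t for the first n uses; in the last use the source
   sends 0 (irrelevant). *)
Definition src_symbol (n : nat) (w : {ffun 'I_n -> bool}) (tau : 'I_n.+1) : bool :=
  if insub (val tau) is Some t then w t else false.

Definition relay_rx (K n : nat) (w : {ffun 'I_n -> bool})
  (z : {ffun 'I_K * 'I_n.+1 -> bool}) (i : 'I_K) (tau : 'I_n.+1) : bool :=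
  src_symbol w tau (+) z (i, tau).

Definition relay_tx (K n : nat) (w : {ffun 'I_n -> bool})
  (z : {ffun 'I_K * 'I_n.+1 -> bool}) (i : 'I_K) (tau : 'I_n.+1) : bool :=
  if val tau == 0%N then false else relay_rx w z i (inord (val tau).-1).

Definition dest_rx (K n : nat) (w : {ffun 'I_n -> bool})
  (z e : {ffun 'I_K * 'I_n.+1 -> bool}) (i : 'I_K) (tau : 'I_n.+1) : bool :=
  relay_tx w z i tau (+) e (i, tau).

Definition received_for_bit (K n : nat) (w : {ffun 'I_n -> bool})
  (z e : {ffun 'I_K * 'I_n.+1 -> bool}) (t : 'I_n) : {ffun 'I_K -> bool} :=
  [ffun i => dest_rx w z e i (lift ord0 t)].

(* Probability of erroneous decoding (Ŵ <> W) with the per-bit decoding rule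
   dec, W uniform on {0,1}^n, Z_i[tau] ~ Bern(p_{s,i}), E_i[tau] ~ Bern(p_{i,d}),
   all independent. *)
Definition block_error_prob (R : realFieldType) (K n : nat) (ps pd : 'I_K -> R)
  (dec : 'I_n -> {ffun 'I_K -> bool} -> bool) : R :=
  \sum_(w : {ffun 'I_n -> bool})
  \sum_(z : {ffun 'I_K * 'I_n.+1 -> bool})
  \sum_(e : {ffun 'I_K * 'I_n.+1 -> bool})
    ((2%:R ^+ n)^-1
     * (\prod_(k : 'I_K * 'I_n.+1) bern (ps k.1) (z k))
     * (\prod_(k : 'I_K * 'I_n.+1) bern (pd k.1) (e k))
     * (if [exists t : 'I_n, dec t (received_for_bit w z e t) != w t]
        then 1 else 0)).

Definition eff_cross (R : realFieldType) (K : nat) (ps pd : 'I_K -> R) (i : 'I_K) : R :=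
  ps i * (1 - pd i) + (1 - ps i) * pd i.

(* p_MAX(M) = max_{m in M} p_m  (0 for empty M, irrelevant since then |M| = 0) *)
Definition pmax (R : realFieldType) (K : nat) (p : 'I_K -> R) (M : {set 'I_K}) : R :=
  \big[Num.max/0]_(m in M) p m.

(* Main.v *)
Require Import Defs.
From HB Require Import structures.
From mathcomp Require Import all_boot all_order all_algebra.
From mathcomp Require Import ring lra.
Import Order.TTheory GRing.Theory Num.Theory.
Local Open Scope ring_scope.
Set Implicit Arguments. Unset Strict Implicit.

Section Aux.
Variable R : realFieldType.

Lemma prod_expect (I : finType) (q : I -> R) (h : I -> bool -> R) :
  \sum_(f : {ffun I -> bool}) (\prod_k bern (q k) (f k)) * \prod_k h k (f k)
  = \prod_k (q k * h k true + (1 - q k) * h k false).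
Proof.
transitivity (\prod_k \sum_(b : bool) bern (q k) b * h k b).
  by rewrite bigA_distr_bigA; apply: eq_bigr => f _; rewrite big_split.
by apply: eq_bigr => k _; rewrite big_bool.
Qed.

Lemma prod_slice (K N : nat) (F : 'I_K -> R) (M : {set 'I_K}) (j0 : 'I_N) :
  \prod_(k : 'I_K * 'I_N) (if (k.2 == j0) && (k.1 \in M) then F k.1 else 1)
  = \prod_(i in M) F i.
Proof.
rewrite -(pair_bigA _ (fun i j => if (j == j0) && (i \in M) then F i else 1)) /= [RHS]big_mkcond; apply: eq_bigr => i _.
rewrite (bigD1 j0) //= eqxx big1 ?mulr1 // => j /negbTE -> //.
Qed.

Lemma bern_le (m : nat) (y : R) : 0 <= y <= 1 ->
  (1 - y) ^+ m * (1 + m%:R * y) <= 1.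
Proof.
move=> /andP[y0 y1]; elim: m => [|m IH]; first by rewrite expr0 mul0r addr0 mulr1.
rewrite exprS [(1 - y) * _]mulrC -mulrA.
have h0 : 0 <= (1 - y) ^+ m by apply: exprn_ge0; lra.
apply: le_trans IH; apply: ler_wpM2l => //.
rewrite -natr1; have hm : 0 <= m%:R :> R by [].
nra.
Qed.
End Aux.
Lemma recvE K n (w : {ffun 'I_n -> bool}) (z e : {ffun 'I_K * 'I_n.+1 -> bool}) t i :
  received_for_bit w z e t i = w t (+) (z (i, inord t) (+) e (i, lift ord0 t)).
Proof.
rewrite ffunE /dest_rx /relay_tx /= /relay_rx /src_symbol.
rewrite add0n.
have h : val (inord t : 'I_n.+1) = val t by rewrite /= inordK // leqW.
by rewrite h valK addbA.
Qed.

Lemma count_ge1 (R : realFieldType) K (M : {set 'I_K}) (X : 'I_K -> bool) (l : R) :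
  1 <= l -> (#|[set i in M | ~~ X i]| <= #|[set i in M | X i]|)%N ->
  1 <= \prod_(i in M) (if X i then l else l^-1).
Proof.
move=> l1 hc.
rewrite (bigID X) /=.
rewrite (eq_bigr (fun _ => l)); last by move=> i /andP[_ ->].
rewrite [X in _ * X](eq_bigr (fun _ => l^-1)); last by move=> i /andP[_ /negbTE ->].
rewrite (eq_bigl (fun i => i \in [set i in M | X i])); last by move=> i; rewrite inE.
rewrite [X in _ * X](eq_bigl (fun i => i \in [set i in M | ~~ X i])); last by move=> i; rewrite inE.
rewrite !prodr_const.
rewrite -(subnK hc) exprD exprVn -mulrA mulfV ?mulr1; last first.
  by rewrite expf_neq0 // gt_eqF // (lt_le_trans ltr01 l1).
exact: exprn_ege1.
Qed.


Section Aux2.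
Variable R : realFieldType.

Lemma prod_slice2 (K N : nat) (H : 'I_K * 'I_N -> R) (M : {set 'I_K}) (j0 : 'I_N) :
  \prod_(k : 'I_K * 'I_N) (if (k.2 == j0) && (k.1 \in M) then H k else 1)
  = \prod_(i in M) H (i, j0).
Proof.
rewrite (eq_bigr (fun k => if (k.2 == j0) && (k.1 \in M) then H (k.1, k.2) else 1)); last by case.
rewrite -(pair_bigA _ (fun i j => if (j == j0) && (i \in M) then H (i, j) else 1)) /= [RHS]big_mkcond.
apply: eq_bigr => i _.
rewrite (bigD1 j0) //= eqxx big1 ?mulr1 // => j /negbTE -> //.
Qed.

Lemma expect_slice K N (q : 'I_K -> R) (M : {set 'I_K}) (j0 : 'I_N) (F : 'I_K -> bool -> R) :
  \sum_(f : {ffun 'I_K * 'I_N -> bool}) (\prod_k bern (q k.1) (f k)) * \prod_(i in M) F i (f (i, j0))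
  = \prod_(i in M) (q i * F i true + (1 - q i) * F i false).
Proof.
pose h (k : 'I_K * 'I_N) (b : bool) := if (k.2 == j0) && (k.1 \in M) then F k.1 b else 1.
transitivity (\sum_(f : {ffun 'I_K * 'I_N -> bool}) (\prod_k bern (q k.1) (f k)) * \prod_k h k (f k)).
  apply: eq_bigr => f _; congr (_ * _).
  by rewrite -(@prod_slice2 K N (fun k => F k.1 (f k)) M j0).
rewrite (prod_expect (fun k => q k.1) h).
rewrite -(@prod_slice2 K N (fun k => q k.1 * F k.1 true + (1 - q k.1) * F k.1 false) M j0).
apply: eq_bigr => k _; rewrite /h; case: ifP => //= _.
by rewrite !mulr1 addrC subrK.
Qed.

Definition decM K (M : {set 'I_K}) n (t : 'I_n) (y : {ffun 'I_K -> bool}) : bool :=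
  (#|[set i in M | ~~ y i]| < #|[set i in M | y i]|)%N.

Lemma err_le K n (M : {set 'I_K}) (w : {ffun 'I_n -> bool}) (z e : {ffun 'I_K * 'I_n.+1 -> bool}) t :
  decM M t (received_for_bit w z e t) != w t ->
  (#|[set i in M | ~~ (z (i, inord t) (+) e (i, lift ord0 t))]|
    <= #|[set i in M | z (i, inord t) (+) e (i, lift ord0 t)]|)%N.
Proof.
rewrite /decM.
have E1 : [set i in M | ~~ received_for_bit w z e t i] =
   [set i in M | ~~ (w t (+) (z (i, inord t) (+) e (i, lift ord0 t)))].
  by apply/setP => i; rewrite !inE recvE.
have E2 : [set i in M | received_for_bit w z e t i] =
   [set i in M | (w t (+) (z (i, inord t) (+) e (i, lift ord0 t)))].
  by apply/setP => i; rewrite !inE recvE.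
rewrite E1 E2; case: (w t) => /=.
  under eq_finset do rewrite negbK.
  by case: ltnP.
by case: ltnP => // h _; apply: ltnW.
Qed.

Lemma pmax_ge (K : nat) (p : 'I_K -> R) (M : {set 'I_K}) i : i \in M -> p i <= pmax p M.
Proof. by move=> iM; rewrite /pmax (bigD1 i) //= le_max lexx. Qed.

Lemma pmax_ge0 (K : nat) (p : 'I_K -> R) (M : {set 'I_K}) : 0 <= pmax p M.
Proof.
rewrite /pmax; elim/big_rec: _ => //= i x _ hx.
by rewrite le_max hx orbT.
Qed.

Lemma pmax_le (K : nat) (p : 'I_K -> R) (M : {set 'I_K}) c : 0 <= c ->
  (forall i, p i <= c) -> pmax p M <= c.
Proof.
move=> c0 hp; rewrite /pmax; elim/big_ind: _ => //= x y hx hy.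
by rewrite ge_max hx.
Qed.

End Aux2.

Section Main.
Variable R : realFieldType.

Lemma bern_ge0 (p : R) b : 0 <= p <= 1/2 -> 0 <= bern p b.
Proof. by case: b => /andP[h1 h2] /=; lra. Qed.

Lemma main_bound K n (ps pd : 'I_K -> R) (M : {set 'I_K}) :
  (forall i, 0 <= ps i <= 1/2) -> (forall i, 0 <= pd i <= 1/2) ->
  block_error_prob ps pd (@decM K M n)
    <= n%:R * (1 - 2 * (1/2 - pmax (eff_cross ps pd) M)^+2) ^+ #|M|.
Proof.
move=> hps hpd.
set d := 1/2 - pmax (eff_cross ps pd) M.
have hp : forall i, 0 <= eff_cross ps pd i <= 1/2.
  move=> i; have /andP[a1 a2] := hps i; have /andP[b1 b2] := hpd i.
  rewrite /eff_cross; apply/andP; split; nra.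
have d0 : 0 <= d.
  rewrite /d subr_ge0; apply: pmax_le; first lra.
  by move=> i; case/andP: (hp i).
have d1 : d <= 1/2 by rewrite /d; have := pmax_ge0 (eff_cross ps pd) M; lra.
set l := 1 + 2 * d.
have l1 : 1 <= l by rewrite /l; lra.
have l0 : 0 < l by rewrite /l; lra.
pose G (t : 'I_n) (z e : {ffun 'I_K * 'I_n.+1 -> bool}) :=
  \prod_(i in M) (if z (i, inord t) (+) e (i, lift ord0 t) then l else l^-1).
have G0 : forall t z e, 0 <= G t z e.
  move=> t z e; apply: prodr_ge0 => i _; case: ifP => _; [lra | by rewrite invr_ge0; lra].
pose Pz (z : {ffun 'I_K * 'I_n.+1 -> bool}) := \prod_(k : 'I_K * 'I_n.+1) bern (ps k.1) (z k).
pose Pe (z : {ffun 'I_K * 'I_n.+1 -> bool}) := \prod_(k : 'I_K * 'I_n.+1) bern (pd k.1) (z k).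
have Pz0 : forall z, 0 <= Pz z by move=> z; apply: prodr_ge0 => k _; apply: bern_ge0.
have Pe0 : forall z, 0 <= Pe z by move=> z; apply: prodr_ge0 => k _; apply: bern_ge0.
have c0 : 0 <= (2%:R ^+ n)^-1 :> R by rewrite invr_ge0 exprn_ge0.
apply: (@le_trans _ _ (\sum_(w : {ffun 'I_n -> bool}) \sum_z \sum_e
   ((2%:R ^+ n)^-1 * Pz z * Pe e * \sum_(t < n) G t z e))).
  rewrite /block_error_prob; apply: ler_sum => w _; apply: ler_sum => z _; apply: ler_sum => e _.
  apply: ler_wpM2l; first by apply: mulr_ge0; [apply: mulr_ge0; [exact: c0 | exact: Pz0] | exact: Pe0].
  case: ifP => [/existsP [t ht]|_]; last by apply: sumr_ge0.
  rewrite (bigD1 t) //=; apply: le_trans (count_ge1 l1 (err_le ht)) _.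
  by rewrite lerDl; apply: sumr_ge0.
have HC : forall t : 'I_n,
    \sum_z \sum_e Pz z * (Pe e * G t z e) <= (1 - 2 * d ^+ 2) ^+ #|M|.
  move=> t.
  under eq_bigr => z _ do rewrite -mulr_sumr.
  under eq_bigr => z _ do rewrite (expect_slice pd M (lift ord0 t)
       (fun i b => if z (i, inord t) (+) b then l else l^-1)).
  rewrite (expect_slice ps M (inord t) (fun i a =>
      pd i * (if a (+) true then l else l^-1) + (1 - pd i) * (if a (+) false then l else l^-1))).
  rewrite -prodr_const; apply: ler_prod => i iM /=.
  set u := l^-1.
  have hu : u * l = 1 by rewrite /u mulVf // gt_eqF.
  have u0 : 0 < u by rewrite /u invr_gt0.
  have hul : u <= l by nra.
  have hu2 : (1/2 + d) * u = 1/2.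
    by rewrite /u /l; field; rewrite gt_eqF //; lra.
  have hpi := pmax_ge (eff_cross ps pd) iM.
  have /andP[hp0 hp1] := hp i.
  have /andP[a1 a2] := hps i; have /andP[b1 b2] := hpd i.
  have e1 : ps i * (pd i * u + (1 - pd i) * l) + (1 - ps i) * (pd i * l + (1 - pd i) * u)
      = eff_cross ps pd i * l + (1 - eff_cross ps pd i) * u by rewrite /eff_cross; ring.
  rewrite e1; apply/andP; split.
    by apply: addr_ge0; apply: mulr_ge0; lra.
  have hA : eff_cross ps pd i - (1/2 - d) <= 0 by rewrite /d; lra.
  have : (eff_cross ps pd i - (1/2 - d)) * (l - u) <= 0.
    by apply: mulr_le0_ge0 => //; lra.
  rewrite /l in hu2 *; nra.
have E : \sum_(w : {ffun 'I_n -> bool}) \sum_z \sum_e (2%:R ^+ n)^-1 * Pz z * Pe e * \sum_(t < n) G t z e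
    = \sum_(t < n) \sum_z \sum_e Pz z * (Pe e * G t z e).
  under eq_bigr => w _ do under eq_bigr => z _ do under eq_bigr => e _ do rewrite -!mulrA.
  under eq_bigr => w _ do under eq_bigr => z _ do rewrite -mulr_sumr.
  under eq_bigr => w _ do rewrite -mulr_sumr.
  rewrite sumr_const card_ffun card_bool card_ord -mulrnAl -mulr_natr natrX mulVf ?mul1r; last first.
    by rewrite expf_neq0 // pnatr_eq0.
  under eq_bigr => z _ do under eq_bigr => e _ do rewrite mulr_sumr mulr_sumr.
  under eq_bigr => z _ do rewrite exchange_big.
  by rewrite exchange_big.
rewrite E; apply: le_trans (ler_sum _ (fun t _ => HC t)) _.
by rewrite sumr_const card_ord [in X in _ <= X]mulrC mulr_natr.
Qed.
End Main.

Lemma delta_bounds (R : realFieldType) K (ps pd : 'I_K -> R) (M : {set 'I_K}) :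
  (forall i, 0 <= ps i <= 1/2) -> (forall i, 0 <= pd i <= 1/2) ->
  0 <= 1/2 - pmax (eff_cross ps pd) M <= 1/2.
Proof.
move=> hps hpd.
have hp : forall i, 0 <= eff_cross ps pd i <= 1/2.
  move=> i; have /andP[a1 a2] := hps i; have /andP[b1 b2] := hpd i.
  rewrite /eff_cross; apply/andP; split; nra.
apply/andP; split.
  rewrite subr_ge0; apply: pmax_le; first lra.
  by move=> i; case/andP: (hp i).
by have := pmax_ge0 (eff_cross ps pd) M; lra.
Qed.

Unset Implicit Arguments.

Theorem corollary3 (R : realFieldType)
  (ps pd : forall K : nat, 'I_K -> R) (M : forall K : nat, {set 'I_K}) :
  (forall K (i : 'I_K), 0 <= ps K i <= 1/2) ->
  (forall K (i : 'I_K), 0 <= pd K i <= 1/2) ->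
  (forall B : R, exists K0 : nat, forall K : nat, (K0 <= K)%N ->
     B < #|M K|%:R * (1/2 - pmax (eff_cross (ps K) (pd K)) (M K)) ^+ 2) ->
  forall eps : R, 0 < eps -> forall Rt : R, Rt < 1 ->
  exists N : nat, forall n : nat, (N <= n)%N ->
    Rt <= n%:R / n.+1%:R /\
    exists K0 : nat, forall K : nat, (K0 <= K)%N ->
      exists dec : 'I_n -> {ffun 'I_K -> bool} -> bool,
        block_error_prob (ps K) (pd K) dec <= eps.
Proof.
move=> Hps Hpd HM eps eps0 Rt Rt1.
have arch : forall B : R, exists k : nat, B < k%:R.
  move=> B; have [K0 HK] := HM B; exists K0.
  apply: lt_le_trans (HK K0 (leqnn _)) _.
  have /andP[d0 d1] := delta_bounds (M K0) (Hps K0) (Hpd K0).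
  set d := 1/2 - _ in d0 d1 *.
  have hm : #|M K0|%:R <= K0%:R :> R.
    by rewrite ler_nat; apply: leq_trans (max_card _) _; rewrite card_ord.
  have hm0 : 0 <= #|M K0|%:R :> R by [].
  have hd2 : d ^+ 2 <= 1 by rewrite expr2; nra.
  nra.
have [N hN] := arch ((1 - Rt)^-1).
exists N => n hn; split.
  have hnN : N%:R <= n%:R :> R by rewrite ler_nat.
  have h1 : 1 < n%:R * (1 - Rt).
    rewrite -ltr_pdivrMr ?subr_gt0 // div1r.
    exact: lt_le_trans hN hnN.
  rewrite ler_pdivlMr ?ltr0Sn // -natr1.
  nra.
have [K0 HK] := HM (n%:R / eps).
exists K0 => K hK; exists (@decM K (M K) n).
apply: le_trans (@main_bound R K n (ps K) (pd K) (M K) (Hps K) (Hpd K)) _.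
have /andP[d0 d1] := delta_bounds (M K) (Hps K) (Hpd K).
have := HK K hK.
set d := 1/2 - _ in d0 d1 *.
set m := #|M K|.
rewrite ltr_pdivrMr // => hq.
have hy : 0 <= 2 * d ^+ 2 <= 1 by apply/andP; split; rewrite expr2; nra.
have hb := bern_le m hy.
have ha : 0 <= (1 - 2 * d ^+ 2) ^+ m by apply: exprn_ge0; rewrite expr2; nra.
set a := (1 - 2 * d ^+ 2) ^+ m in hb ha *.
set q := m%:R * d ^+ 2 in hq.
have hq0 : 0 <= q by rewrite /q; apply: mulr_ge0 => //; apply: sqr_ge0.
have hb' : a + 2 * a * q <= 1 by rewrite /q; move: hb; rewrite mulrDr mulr1; nra.
have hn0 : 0 <= n%:R :> R by [].
nra.
Qed.
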